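(* Let $q$ be a power of the prime $p$, let $\mathcal{G}$ be a subgroup of the additive group $(\mathbb{F}_q,+)$ of order $p$, and let $f$ be a $\mathcal{G}$-fixed monic irreducible polynomial in $\mathbb{F}_q[T]$ of degree $ps$ (with $s\in\mathbb{Z}_{\geqslant 1}$). Then, in $\mathbb{F}_{q^s}[T]$, $f$ factors as a product of irreducible polynomials over $\mathbb{F}_{q^s}$ each of which is $\mathcal{G}$-fixed and of the form $T^p-\beta T-\gamma$ with $\beta\in\mathbb{F}_q^{\times}$ and $\gamma\in\mathbb{F}_{q^s}$.
   Context: A polynomial $f$ (over $\mathbb{F}_q$ or an extension of $\mathbb{F}_q$) is $\mathcal{G}$-fixed if $f(T+a)=f(T)$ for all $a\in\mathcal{G}$. Irreducible polynomials over $\mathbb{F}_{q^s}$ of the form $T^p-\beta T-\gamma$ with $\beta\in\mathbb{F}_q^\times$, $\gamma\in\mathbb{F}_{q^s}$ are called almost Artin–Schreier primes. *)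

(* Defs.v *)
From HB Require Import structures.
From mathcomp Require Import all_boot all_order all_algebra all_field.
Set Implicit Arguments. Unset Strict Implicit. Unset Printing Implicit Defensive.
Import GRing.Theory.
Local Open Scope ring_scope.

Definition Gfixed (R : comNzRingType) (G : pred R) (f : {poly R}) : Prop :=
  forall a, G a -> f \Po ('X + a%:P) = f.

Definition add_subgroup (F : zmodType) (G : {pred F}) : Prop :=
  0 \in G /\ (forall a b, a \in G -> b \in G -> a - b \in G).

(* Main.v *)
Require Import Defs.
From HB Require Import structures.
From mathcomp Require Import all_boot all_order all_algebra all_field.
From mathcomp Require Import fingroup abelian.
From mathcomp Require Import ring zify.
From Stdlib Require Import Classical.
Import GRing.Theory.
Local Open Scope ring_scope.



Lemma in_qpoly_eq0 (K : fieldType) (u P : {poly K}) (hI : monic_irreducible_poly u) :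
  (in_qpoly u P == 0) = (u %| P).
Proof.
have hM : u \is monic by case: hI.
apply/eqP/idP => [/val_eqP /= | hDp].
  by rewrite -Pdiv.IdomainMonic.modpE // (mk_monicE hI).
by apply/val_eqP; rewrite /= -Pdiv.IdomainMonic.modpE (mk_monicE hI) //; apply/eqP.
Qed.

Lemma lemA (K : finFieldType) (u : {poly K}) :
  irreducible_poly u -> u \is monic -> u %| 'X^(#|K| ^ (size u).-1) - 'X.
Proof.
move=> uI uM; have hI : monic_irreducible_poly u := (uI, uM).
pose x : qfpoly hI := in_qpoly u 'X.
have := expf_card x; rewrite card_qfpoly => hx.
rewrite -(@in_qpoly_eq0 _ u _ hI) rmorphB rmorphXn /=.
by rewrite -/x hx subrr.
Qed.
Lemma expf_cardn (K : finFieldType) (c : K) n : c ^+ (#|K| ^ n)%N = c.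
Proof.
elim: n => [|n IH]; first by rewrite expr1.
by rewrite expnS exprM expf_card IH.
Qed.

Lemma pnat_card (K : finFieldType) n : [pchar K].-nat (#|K| ^ n)%N.
Proof.
have [l lp lc] := finPcharP K.
rewrite (eq_pnat _ (pcharf_eq lc)) pnatX; apply/orP; left.
have := abelem_pgroup (fin_ring_pchar_abelem lc).
by rewrite /pgroup.pgroup cardsT.
Qed.

Lemma frob_horner (R : comNzRingType) (N : nat) (P : {poly R}) (z : R) :
  [pchar R].-nat N -> (0 < N)%N -> (forall i, P`_i ^+ N = P`_i) ->
  P.[z] ^+ N = P.[z ^+ N].
Proof.
move=> HN N0 hc.
have frobsum : forall m (c : 'I_m -> R),
    (\sum_(i < m) c i) ^+ N = \sum_(i < m) (c i) ^+ N.
  elim=> [|m IH] c; first by rewrite !big_ord0 expr0n eqn0Ngt N0.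
  by rewrite !big_ord_recr /= exprDn_pchar // (IH (fun i => c (widen_ord (leqnSn m) i))).
rewrite !horner_coef frobsum; apply: eq_bigr => i _.
by rewrite exprMn hc -!exprM mulnC.
Qed.

Lemma lemB (K : finFieldType) (u : {poly K}) n :
  irreducible_poly u -> u \is monic -> (0 < n)%N ->
  u %| 'X^(#|K| ^ n)%N - 'X -> ((size u).-1 <= n)%N.
Proof.
move=> uI uM n0 hdvd; have hI : monic_irreducible_poly u := (uI, uM).
pose N := (#|K| ^ n)%N.
pose x : qfpoly hI := in_qpoly u 'X.
have hx : x ^+ N = x.
  apply/eqP; rewrite -subr_eq0; move: hdvd; rewrite -(@in_qpoly_eq0 _ u _ hI).
  by rewrite rmorphB rmorphXn.
have HN : [pchar qfpoly hI].-nat N.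
  by rewrite (eq_pnat _ (pchar_qpoly u)) pnat_card.
have N0 : (0 < N)%N by rewrite expn_gt0 (leq_trans _ (finNzRing_gt1 K)).
have fixC : forall c : K, (qpolyC u c : qfpoly hI) ^+ N = qpolyC u c.
  move=> c; rewrite -rmorphXn /=; congr (qpolyC u _); exact: expf_cardn.
have ally : forall y : qfpoly hI, y ^+ N = y.
  move=> y.
  have Ey : y = (map_poly (qpolyC u) (y : {poly K})).[x].
    rewrite -in_qpoly_comp_horner comp_polyXr; apply: val_inj => /=.
    by rewrite /= [RHS]in_qpoly_small // size_mk_monic.
  rewrite [in LHS]Ey.
  have HN' : [pchar {poly %/ u}].-nat N by rewrite (eq_pnat _ (pchar_qpoly u)) pnat_card.
  rewrite (@frob_horner _ _ _ _ HN' N0); last by move=> i; rewrite coef_map fixC.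
  by rewrite hx -Ey.
have Q1 := finNzRing_gt1 K.
have N1 : (1 < N)%N.
  by apply: (leq_trans Q1); have := leq_exp2l 1 n Q1; rewrite expn1 => ->.
have := @max_poly_roots _ ('X^N - 'X : {poly qfpoly hI}) (enum (qfpoly hI)).
rewrite size_polyDl ?size_polyXn ?size_polyN ?size_polyX // -cardE card_qfpoly.
rewrite ltnS leq_exp2l // => -> //.
- rewrite -size_poly_eq0 size_polyDl ?size_polyXn ?size_polyN ?size_polyX //.
- by apply/allP => y _; rewrite rootE !hornerE ally subrr.
- exact: enum_uniq.
Qed.



Lemma G_mult (F : finFieldType) (p : nat) (G : {set F}) (a : F) :
  p \in [pchar F] -> add_subgroup (G : {pred F}) -> #|G| = p -> a \in G -> a != 0 ->
  forall b, b \in G -> exists k : nat, b = k%:R * a.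
Proof.
move=> pc [G0 GB] cG aG a0 b bG.
have GN : forall c, c \in G -> - c \in G by move=> c hc; rewrite -sub0r GB.
have GD : forall c d, c \in G -> d \in G -> c + d \in G.
  by move=> c d hc hd; rewrite -[d]opprK GB ?GN.
have kG : forall k : nat, k%:R * a \in G.
  by elim=> [|k IH]; rewrite ?mul0r // mulrSr mulrDl mul1r GD.
pose S := [set (val k)%:R * a | k : 'I_p].
have SG : S \subset G by apply/subsetP => c /imsetP [k _ ->]; apply: kG.
have cS : #|S| = p.
  rewrite card_imset ?card_ord // => i j /= /eqP.
  rewrite -subr_eq0 -mulrBl mulf_eq0 (negbTE a0) orbF => /eqP hij.
  apply: val_inj => /=.
  wlog le_ji : i j hij / (j <= i)%N.
    move=> W; case: (leqP j i) => [|/ltnW] h; first exact: W.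
    by apply/esym/W => //; rewrite -opprB hij oppr0.
  move: hij; rewrite -natrB // => /eqP; rewrite -(dvdn_pcharf pc) => hd.
  have : (i - j < p)%N := leq_ltn_trans (leq_subr _ _) (ltn_ord i).
  case: (posnP (i - j)) => [/eqP|hpos].
    by rewrite subn_eq0 => hle _; apply/eqP; rewrite eqn_leq hle le_ji.
  by rewrite ltnNge (dvdn_leq hpos hd).
have SeqG : S = G by apply/eqP; rewrite eqEcard SG cS cG /=.
by move: bG; rewrite -SeqG => /imsetP [k _ ->]; exists k.
Qed.


Lemma frob_mult (F : finFieldType) (p : nat) (a : F) (k : nat) :
  p \in [pchar F] -> (k%:R * a) ^+ p = a ^+ p.-1 * (k%:R * a).
Proof.
move=> pc; rewrite exprMn.
have := pFrobenius_aut_nat pc k; rewrite pFrobenius_autE => ->.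
have p0 : (0 < p)%N by rewrite prime_gt0 // (pcharf_prime pc).
by rewrite -{1}(prednK p0) exprS; ring.
Qed.

Lemma Lp_fixed (F : finFieldType) p (be b : F) : p \in [pchar F] -> b ^+ p = be * b ->
  ('X^p - be *: 'X) \Po ('X + b%:P) = 'X^p - be *: 'X.
Proof.
move=> pc hb.
have pcP : p \in [pchar {poly F}] by rewrite pchar_poly.
rewrite comp_polyB comp_polyZ comp_polyX comp_Xn_poly.
rewrite exprDn_pchar; last by rewrite (eq_pnat _ (pcharf_eq pcP)) pnat_id ?(pcharf_prime pc).
rewrite -polyC_exp hb -!mul_polyC polyCM; ring.
Qed.


Lemma fixed_const (F : finFieldType) (p : nat) (G : {set F}) (r : {poly F}) :
  (0 < p)%N -> #|G| = p -> (size r <= p)%N -> Gfixed (fun a => a \in G) r -> r = (r.[0])%:P.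
Proof.
move=> p0 cG sr hr; apply/eqP; rewrite -subr_eq0; apply/negPn/negP => hne.
have hs : (size (r - (r.[0])%:P)%R <= p)%N.
  rewrite (leq_trans (size_polyD _ _)) // size_polyN size_polyC geq_max sr.
  by case: (_ != 0).
have hall : all (root (r - (r.[0])%:P)) (enum (mem G)).
  apply/allP => b; rewrite mem_enum => bG.
  by rewrite rootE !hornerE -{2}(hr b bG) horner_comp !hornerE ?add0r subrr.
have := max_poly_roots hne hall (enum_uniq (mem G)).
by rewrite -cardE cG => /leq_trans/(_ hs); rewrite ltnn.
Qed.



Lemma decomp (F : finFieldType) (p : nat) (G : {set F}) (Lp : {poly F}) :
  (0 < p)%N -> #|G| = p -> size Lp = p.+1 ->
  (forall b, b \in G -> Lp \Po ('X + b%:P) = Lp) ->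
  forall h, Gfixed (fun a => a \in G) h -> exists g, h = g \Po Lp.
Proof.
move=> p0 cG sL hL h.
have Lp0 : Lp != 0 by rewrite -size_poly_eq0 sL.
elim: {h}(size h) {-2}h (leqnn (size h)) => [|n IH] h sh hh.
  by exists 0; move: sh; rewrite leqn0 size_poly_eq0 => /eqP ->; rewrite comp_poly0.
have sr : (size (h %% Lp)%R < size Lp)%N by rewrite ltn_modp.
have hfix : forall b, b \in G ->
    (h %/ Lp) \Po ('X + b%:P) = h %/ Lp /\ (h %% Lp) \Po ('X + b%:P) = h %% Lp.
  move=> b bG.
  have E : h = ((h %/ Lp) \Po ('X + b%:P)) * Lp + ((h %% Lp) \Po ('X + b%:P)).
    have H1 := hh b bG.
    by rewrite -[LHS]H1 [in LHS](divp_eq h Lp) comp_polyD comp_polyM (hL b bG).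
  have sr' : (size ((h %% Lp) \Po ('X + b%:P))%R < size Lp)%N.
    by rewrite size_comp_poly2 ?size_XaddC.
  split.
    by have := divp_addl_mul_small ((h %/ Lp) \Po ('X + b%:P)) sr'; rewrite -E.
  by have := modp_addl_mul_small ((h %/ Lp) \Po ('X + b%:P)) sr'; rewrite -E.
set q := h %/ Lp; set r := h %% Lp.
have rc : r = (r.[0])%:P.
  apply: (@fixed_const F p G r p0 cG); first by rewrite -ltnS -sL.
  by move=> b bG; case: (hfix b bG).
have [q0|qn0] := eqVneq q 0.
  by exists (r.[0])%:P; rewrite comp_polyC -rc (divp_eq h Lp) -/q q0 mul0r add0r.
have [g' Eg'] : exists g', q = g' \Po Lp.
  apply: IH; last by move=> b bG; case: (hfix b bG).
  rewrite /q size_divp // sL /=.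
  by rewrite leq_subLR (leq_trans sh) // -add1n leq_add2r.
exists (g' * 'X + (r.[0])%:P).
by rewrite comp_poly_MXaddC -Eg' -rc -divp_eq.
Qed.


Lemma size_compL (F : fieldType) (d Lp : {poly F}) p :
  size Lp = p.+1 -> (0 < p)%N -> d != 0 -> size (d \Po Lp) = ((size d).-1 * p).+1.
Proof.
move=> sL p0 d0.
have sL1 : (1 < size Lp)%N by rewrite sL ltnS.
have := size_comp_poly d Lp; rewrite sL /= => <-.
rewrite prednK // size_poly_gt0 comp_poly_eq0 //.
Qed.

Lemma comp_facts (F : fieldType) (f g Lp : {poly F}) p s :
  (0 < p)%N -> (0 < s)%N -> Lp \is monic -> size Lp = p.+1 -> f = g \Po Lp ->
  f \is monic -> irreducible_poly f -> size f = (p * s).+1 ->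
  [/\ g \is monic, size g = s.+1 & irreducible_poly g].
Proof.
move=> p0 s0 LM sL Ef fM fI sf.
have sL1 : (1 < size Lp)%N by rewrite sL ltnS.
have g0 : g != 0.
  by apply/eqP => g0; move: sf; rewrite Ef g0 comp_poly0 size_poly0.
have sg : size g = s.+1.
  move: sf; rewrite Ef (@size_compL _ _ _ _ sL p0) // => /eq_add_S /eqP.
  rewrite [(p * s)%N]mulnC eqn_pmul2r // => /eqP <-; rewrite prednK // size_poly_gt0 //.
have gM : g \is monic.
  by move: fM; rewrite !monicE Ef lead_coef_comp // (eqP LM) expr1n mulr1.
split => //; split; first by rewrite sg ltnS.
move=> d sd dg.
have d0 : d != 0 by apply/eqP => d0; move: dg; rewrite d0 dvd0p (negbTE g0).
have sd2 : (1 < size d)%N.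
  by move: sd d0; rewrite -size_poly_gt0; case: (size d) => [|[]].
have dLf : (d \Po Lp) %| f.
  by rewrite Ef -(divpK dg) comp_polyM dvdp_mull.
have sdL : size (d \Po Lp) != 1%N.
  rewrite (@size_compL _ _ _ _ sL p0) // eqSS muln_eq0 negb_or -lt0n -lt0n p0 andbT.
  by rewrite -ltnS prednK // ltnW.
have := fI _ sdL dLf => /eqp_size; rewrite Ef !(@size_compL _ _ _ _ sL p0) // => /eq_add_S /eqP.
rewrite eqn_pmul2r // => /eqP hs.
rewrite -dvdp_size_eqp // -(prednK (ltnW sd2)) hs prednK // size_poly_gt0 //.
Qed.


Lemma irr_div (K : fieldType) (u : {poly K}) :
  (1 < size u)%N -> exists2 w, irreducible_poly w & w %| u.
Proof.
elim: {u}(size u) {-2}u (leqnn (size u)) => [|n IH] u su su1.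
  by move: su; rewrite leqn0 => /eqP s0; rewrite s0 in su1.
case: (classic (irreducible_poly u)) => [uI|nI]; first by exists u.
have [q [sq [qu nqu]]] : exists q : {poly K}, size q != 1%N /\ q %| u /\ ~~ (q %= u).
  apply: NNPP => hno; apply: nI; split => // q sq qu.
  by apply/negPn/negP => nq; apply: hno; exists q.
have u0 : u != 0 by rewrite -size_poly_gt0 ltnW.
have q0 : q != 0 by apply/eqP => q0; move: qu; rewrite q0 dvd0p (negbTE u0).
have sq2 : (1 < size q)%N.
  by move: sq q0; rewrite -size_poly_gt0; case: (size q) => [|[]].
have squ : (size q < size u)%N.
  rewrite ltn_neqAle dvdp_leq // andbT.
  by apply: contra nqu => /eqP e; rewrite -dvdp_size_eqp // e.
have squ' : (size q <= n)%N by rewrite -ltnS (leq_trans squ su).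
have [w wI wq] := IH q squ' sq2.
by exists w => //; apply: dvdp_trans wq qu.
Qed.

Lemma irr_monic (K : fieldType) (w : {poly K}) : irreducible_poly w ->
  exists wm, [/\ wm \is monic, irreducible_poly wm, wm %= w & size wm = size w].
Proof.
move=> wI; have w0 := irredp_neq0 wI.
have l0 : (lead_coef w)^-1 != 0 by rewrite invr_eq0 lead_coef_eq0.
have E : (lead_coef w)^-1 *: w %= w by rewrite eqp_scale.
have sz : size ((lead_coef w)^-1 *: w) = size w by rewrite size_scale.
exists ((lead_coef w)^-1 *: w); split => //.
- by rewrite monicE lead_coefZ mulVf // lead_coef_eq0.
- split; first by rewrite sz; case: wI.
  move=> q sq qd; have qw : q %| w by rewrite -(eqp_dvdr _ E).
  by rewrite (eqp_trans (wI _ sq qw)) // eqp_sym.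
Qed.


Lemma factor_irr (F L : finFieldType) (iota : {rmorphism F -> L}) (p s : nat)
  (f : {poly F}) (H : {poly L}) :
  (0 < p)%N -> (0 < s)%N -> #|L| = (#|F| ^ s)%N -> f \is monic -> irreducible_poly f ->
  size f = (p * s).+1 -> size H = p.+1 -> H %| map_poly iota f ->
  irreducible_poly H.
Proof.
move=> p0 s0 cL fM fI sf sH Hf.
split; first by rewrite sH ltnS.
move=> u su uH; apply/negPn/negP => hne.
have H0 : H != 0 by rewrite -size_poly_gt0 sH.
have u0 : u != 0 by apply/eqP => u0; move: uH; rewrite u0 dvd0p (negbTE H0).
have su2 : (1 < size u)%N.
  by move: su u0; rewrite -size_poly_gt0; case: (size u) => [|[]].
have suH : (size u <= p)%N.
  rewrite -ltnS -sH ltn_neqAle dvdp_leq // andbT.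
  by apply: contra hne => /eqP e; rewrite -dvdp_size_eqp // e.
have [w wI wu] := @irr_div _ _ su2.
have [wm [wmM wmI wmw swm]] := @irr_monic _ _ wI.
have sw2 : (1 < size w)%N by case: wI.
have swu : (size w <= size u)%N by apply: dvdp_leq.
set d := (size w).-1.
have hA := @lemA _ _ wmI wmM; rewrite swm -/d cL -expnM in hA.
pose P : {poly F} := 'X^(#|F| ^ (s * d)) - 'X.
have wP : w %| map_poly iota P.
  by rewrite -(eqp_dvdl _ wmw) /P rmorphB /= map_polyXn map_polyX.
have wf : w %| map_poly iota f by apply: dvdp_trans wu (dvdp_trans uH Hf).
have wg : w %| map_poly iota (gcdp f P) by rewrite gcdp_map dvdp_gcd wf wP.
have f0 : f != 0 by apply: irredp_neq0.
have g0 : gcdp f P != 0 by rewrite gcdp_eq0 negb_and f0.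
have sg : (size w <= size (gcdp f P))%N.
  by rewrite -(size_map_poly iota) dvdp_leq // map_poly_eq0.
have gf : gcdp f P %= f.
  apply: fI; last exact: dvdp_gcdl.
  by rewrite neq_ltn (leq_trans sw2 sg) orbT.
have fP : f %| P by rewrite -(eqp_dvdl _ gf) dvdp_gcdr.
have d0 : (0 < d)%N by rewrite /d -ltnS prednK // ltnW.
have sd0 : (0 < s * d)%N by rewrite muln_gt0 s0 d0.
have := @lemB _ _ _ fI fM sd0 fP; rewrite sf /=.
have dp : (d < p)%N.
  rewrite /d; move: sw2 (leq_trans swu suH); case: (size w) => // n _ /=.
rewrite [(p * s)%N]mulnC leq_pmul2l // => hle.
by have := leq_ltn_trans hle dp; rewrite ltnn.
Qed.


Lemma size_Xp (R : fieldType) p (c d : R) : (1 < p)%N ->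
  size ('X^p - c *: 'X - d%:P) = p.+1.
Proof.
move=> p1; rewrite -addrA size_polyDl ?size_polyXn //.
apply: leq_ltn_trans (size_polyD _ _) _.
rewrite gtn_max !size_polyN size_polyC.
rewrite (leq_ltn_trans (size_scale_leq _ _)) ?size_polyX ?ltnS //=.
by rewrite (leq_trans (leq_b1 _)) // ltnW.
Qed.

Lemma comp_prod (R : comNzRingType) (rs : seq R) (Q : {poly R}) :
  (\prod_(x <- rs) ('X - x%:P)) \Po Q = \prod_(x <- rs) (Q - x%:P).
Proof.
elim: rs => [|x rs IH]; first by rewrite !big_nil -polyC1 comp_polyC.
by rewrite !big_cons comp_polyM IH comp_polyB comp_polyX comp_polyC.
Qed.

Theorem theorem2p5 (F L : finFieldType) (iota : {rmorphism F -> L})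
  (p s : nat) (G : {set F}) (f : {poly F}) :
  p \in [pchar F] ->
  (0 < s)%N ->
  #|L| = (#|F| ^ s)%N ->
  add_subgroup (G : {pred F}) -> #|G| = p ->
  f \is monic -> irreducible_poly f -> size f = (p * s).+1 ->
  Gfixed (fun a => a \in G) f ->
  exists r : seq (F * L),
    map_poly iota f = \prod_(x <- r) ('X^p - (iota x.1) *: 'X - (x.2)%:P)
    /\ (forall x, x \in r ->
          [/\ x.1 != 0,
              irreducible_poly ('X^p - (iota x.1) *: 'X - (x.2)%:P)
            & Gfixed (fun b => [exists a in G, b == iota a])
                     ('X^p - (iota x.1) *: 'X - (x.2)%:P)]).
Proof.
move=> pc s0 cL hG cG fM fI sf hf.
have pP := pcharf_prime pc.
have p1 : (1 < p)%N by apply: prime_gt1.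
have p0 : (0 < p)%N by apply: ltnW.
have [a aG a0] : exists2 a, a \in G & a != 0.
  case: (set_0Vmem (G :\ 0)) => [E|[a]]; last first.
    by rewrite in_setD1 => /andP [a0 aG]; exists a.
  have := cardsD1 0 G; rewrite E cards0 addn0 cG => hp.
  by move: p1; rewrite hp; case: (_ \in _).
pose be := a ^+ p.-1.
have be0 : be != 0 by rewrite expf_neq0.
have Gb : forall b, b \in G -> b ^+ p = be * b.
  move=> b bG; have [k ->] := @G_mult _ _ _ _ pc hG cG aG a0 _ bG.
  exact: frob_mult.
pose Lp : {poly F} := 'X^p - be *: 'X.
have sL : size Lp = p.+1 by rewrite -(@size_Xp _ _ be 0 p1) polyC0 subr0.
have LM : Lp \is monic.
  rewrite monicE /Lp lead_coefDl ?lead_coefXn // size_polyXn size_polyN.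
  by rewrite (leq_ltn_trans (size_scale_leq _ _)) ?size_polyX.
have hL : forall b, b \in G -> Lp \Po ('X + b%:P) = Lp.
  by move=> b bG; apply: (@Lp_fixed _ _ _ _ pc (Gb b bG)).
have [g Eg] := @decomp _ _ _ _ p0 cG sL hL _ hf.
have [gM sg gI] := @comp_facts _ _ _ _ _ _ p0 s0 LM sL Eg fM fI sf.
have hA := @lemA _ _ gI gM.
rewrite sg /= -cL -(dvdp_map iota) rmorphB /= map_polyXn map_polyX in hA.
move: hA; rewrite finField_genPoly => /dvdp_prod_XsubC [m Em].
have Eg' : map_poly iota g = \prod_(x <- mask m (index_enum L)) ('X - x%:P).
  apply/eqP; rewrite -eqp_monic ?map_monic ?monic_prod_XsubC //.
set rs := mask m (index_enum L) in Eg'.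
have LpE : map_poly iota Lp = 'X^p - iota be *: 'X.
  by rewrite rmorphB /= map_polyXn map_polyZ /= map_polyX.
have Ef : map_poly iota f = \prod_(x <- rs) ('X^p - iota be *: 'X - x%:P).
  by rewrite Eg map_comp_poly Eg' LpE comp_prod.
exists [seq (be, x) | x <- rs]; split; first by rewrite Ef big_map.
move=> x /mapP [c cin ->] /=; split => //.
- apply: (@factor_irr F L iota p s f _ p0 s0 cL fM fI sf); first exact: size_Xp.
  by rewrite Ef (big_rem _ cin) /= dvdp_mulIl.
- move=> b /exists_inP [a1 a1G /eqP ->].
  have XE : 'X + (iota a1)%:P = map_poly iota ('X + a1%:P).
    by rewrite rmorphD /= map_polyX map_polyC.
  by rewrite -LpE comp_polyB comp_polyC XE -map_comp_poly hL.
Qed.
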